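(* Let $\mathcal T$ be the set of all finite strings of $0$'s and $1$'s (of length $\ge 1$), and for $\sigma=(\sigma_1,\dots,\sigma_{\ell(\sigma)})\in\mathcal T$ let $I(\sigma)=\left(\sum_{i=1}^{\ell(\sigma)}\sigma_i2^{-i},\;2^{-\ell(\sigma)}+\sum_{i=1}^{\ell(\sigma)}\sigma_i2^{-i}\right]$ and $d_\sigma=\mathbf 1_{I(\sigma)}$. Let $\Psi:\mathcal T\to\mathbb Z\setminus\{0\}$ be injective, let $d=\mathbf 1_{(0,1]}$, and for $\sigma\in\mathcal T$ let $f_\sigma=d_\sigma+\ell(\sigma)\cdot\mathbf 1_{(\Psi(\sigma),\Psi(\sigma)+1]}$. Then the subset $M=\{0,d\}\cup\{f_\sigma:\sigma\in\mathcal T\}$ of $L_1(-\infty,\infty)$, with the $L_1$ metric, is locally finite and admits no isometric embedding into $\ell_1$.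
   Context: $\ell(\sigma)$ denotes the length of the string $\sigma$, and $\mathbf 1_I$ the indicator function of a set $I\subset\mathbb R$. A metric space is locally finite if every ball of finite radius in it has finite cardinality. *)

(* Defs.v *)
From Stdlib Require Import Reals List ZArith.
Open Scope R_scope.

(* Strings of 0/1 are lists of booleans; T = nonempty ones. *)
Definition bitR (b : bool) : R := if b then 1 else 0.

Fixpoint bsum (k : nat) (s : list bool) : R :=
  match s with
  | nil => 0
  | b :: t => bitR b * (/2) ^ (k + 1) + bsum (S k) t
  end.

Definition leftI (s : list bool) : R := bsum 0 s.

Definition ind (a b : R) (x : R) : R :=
  if Rlt_dec a x then (if Rle_dec x b then 1 else 0) else 0.

Definition d_sigma (s : list bool) : R -> R :=
  ind (leftI s) ((/2) ^ length s + leftI s).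

Definition d_fun : R -> R := ind 0 1.

Definition zero_fun : R -> R := fun _ => 0.

Definition f_sigma (Psi : list bool -> Z) (s : list bool) : R -> R :=
  fun x => d_sigma s x + INR (length s) * ind (IZR (Psi s)) (IZR (Psi s) + 1) x.

Definition inM (Psi : list bool -> Z) (g : R -> R) : Prop :=
  g = zero_fun \/ g = d_fun \/ exists s, s <> nil /\ g = f_sigma Psi s.

Definition is_L1dist (f g : R -> R) (D : R) : Prop :=
  forall eps, eps > 0 -> exists N : R, forall a b, a <= - N -> N <= b ->
    exists pr : Riemann_integrable (fun x => Rabs (f x - g x)) a b,
      Rabs (RiemannInt pr - D) < eps.

Definition in_l1 (u : nat -> R) : Prop :=
  exists l, infinite_sum (fun n => Rabs (u n)) l.

Definition M_locally_finite (Psi : list bool -> Z) : Prop :=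
  forall x r, inM Psi x ->
    exists l : list (R -> R), forall y D, inM Psi y -> is_L1dist x y D -> D <= r -> In y l.

Definition M_l1_isometric_embedding (Psi : list bool -> Z)
    (phi : (R -> R) -> (nat -> R)) : Prop :=
  (forall x, inM Psi x -> in_l1 (phi x)) /\
  (forall x y D, inM Psi x -> inM Psi y -> is_L1dist x y D ->
     infinite_sum (fun n => Rabs (phi x n - phi y n)) D).

(* Main.v *)
Require Import Defs.
From Stdlib Require Import Reals List ZArith Lra Lia.
From Coquelicot Require Import Coquelicot.
Open Scope R_scope.

Lemma RInt_cst (f : R -> R) a b v : (forall x, Rmin a b < x < Rmax a b -> f x = v) ->
  is_RInt f a b ((b - a) * v).
Proof.
  intros H. apply is_RInt_ext with (fun _ => v). intros; symmetry; auto.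
  apply (is_RInt_const (V:=R_NormedModule)).
Qed.

Lemma RIval (f : R -> R) a b (l l' : R) : is_RInt f a b l -> l = l' -> is_RInt f a b l'.
Proof. intros H ->; exact H. Qed.

Lemma ind_RInt a b c e : a <= c -> c <= e -> e <= b -> is_RInt (Defs.ind c e) a b (e - c).
Proof.
  intros H1 H2 H3.
  assert (A1 : is_RInt (Defs.ind c e) a c ((c - a) * 0)).
  { apply RInt_cst. intros x Hx. rewrite Rmin_left in Hx by lra. rewrite Rmax_right in Hx by lra.
    unfold Defs.ind. destruct (Rlt_dec c x); [lra|auto]. }
  assert (A2 : is_RInt (Defs.ind c e) c e ((e - c) * 1)).
  { apply RInt_cst. intros x Hx. rewrite Rmin_left in Hx by lra. rewrite Rmax_right in Hx by lra.
    unfold Defs.ind. destruct (Rlt_dec c x); [|lra]. destruct (Rle_dec x e); lra. }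
  assert (A3 : is_RInt (Defs.ind c e) e b ((b - e) * 0)).
  { apply RInt_cst. intros x Hx. rewrite Rmin_left in Hx by lra. rewrite Rmax_right in Hx by lra.
    unfold Defs.ind. destruct (Rlt_dec c x); [|lra]. destruct (Rle_dec x e); lra. }
  pose proof (is_RInt_Chasles _ _ _ _ _ _ A1 A2) as A12.
  pose proof (is_RInt_Chasles _ _ _ _ _ _ A12 A3) as A.
  eapply RIval. exact A. unfold plus; simpl. ring.
Qed.

Lemma RInt_plusR (f g : R -> R) a b If Ig : is_RInt f a b If -> is_RInt g a b Ig ->
  is_RInt (fun x => f x + g x) a b (If + Ig).
Proof. intros. apply (is_RInt_plus (V:=R_NormedModule)); auto. Qed.

Lemma RInt_scalR (f : R -> R) a b k If : is_RInt f a b If ->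
  is_RInt (fun x => k * f x) a b (k * If).
Proof. intros. apply (is_RInt_scal (V:=R_NormedModule)); auto. Qed.

Lemma L1_of (f g h : R -> R) D p q :
  (forall z, Rabs (f z - g z) = h z) ->
  (forall a b, a <= p -> q <= b -> is_RInt h a b D) -> is_L1dist f g D.
Proof.
  intros Hh HI eps Heps. exists (Rabs p + Rabs q). intros a b Ha Hb.
  assert (Hp : a <= p) by (pose proof (Rle_abs (-p)); rewrite Rabs_Ropp in H; pose proof (Rabs_pos q); lra).
  assert (Hq : q <= b) by (pose proof (Rle_abs q); pose proof (Rabs_pos p); lra).
  pose proof (HI a b Hp Hq) as Hi.
  assert (Hi' : is_RInt (fun x => Rabs (f x - g x)) a b D).
  { apply is_RInt_ext with h; [intros; symmetry; auto | exact Hi]. }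
  assert (Hex : ex_RInt (fun x => Rabs (f x - g x)) a b) by (exists D; exact Hi').
  exists (ex_RInt_Reals_0 _ _ _ Hex).
  rewrite <- RInt_Reals. rewrite (is_RInt_unique _ _ _ _ Hi'). rewrite Rminus_diag, Rabs_R0. lra.
Qed.

Lemma pow_half_S k : (/2)^(S k) = /2 * (/2)^k.
Proof. reflexivity. Qed.

Lemma pow_half_pos k : 0 < (/2)^k.
Proof. apply pow_lt; lra. Qed.

Lemma bsum_bounds s : forall k, 0 <= bsum k s /\ bsum k s + (/2)^(k + length s) <= (/2)^k.
Proof.
  induction s as [|b t IH]; intros k; simpl.
  - rewrite Nat.add_0_r. lra.
  - destruct (IH (S k)) as [H1 H2].
    replace (k + S (length t))%nat with (S k + length t)%nat by lia.
    replace (k + 1)%nat with (S k) by lia.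
    rewrite pow_half_S in *. pose proof (pow_half_pos k).
    destruct b; unfold bitR; lra.
Qed.

Lemma bsum_disj s : forall t k, length s = length t -> s <> t ->
  bsum k s + (/2)^(k + length s) <= bsum k t \/ bsum k t + (/2)^(k + length t) <= bsum k s.
Proof.
  induction s as [|b s IH]; intros [|c t] k Hl Hne; simpl in *; try discriminate.
  - congruence.
  - injection Hl as Hl.
    replace (k + S (length s))%nat with (S k + length s)%nat by lia.
    replace (k + S (length t))%nat with (S k + length t)%nat by lia.
    replace (k + 1)%nat with (S k) by lia.
    destruct (Bool.bool_dec b c) as [<-|Hbc].
    + assert (s <> t) by congruence.
      destruct (IH t (S k) Hl H); lra.
    + pose proof (bsum_bounds s (S k)) as [A1 A2]. pose proof (bsum_bounds t (S k)) as [B1 B2].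
      destruct b, c; try congruence; unfold bitR; lra.
Qed.

Lemma I_in01 s : 0 <= leftI s /\ (/2)^(length s) + leftI s <= 1.
Proof. unfold leftI. pose proof (bsum_bounds s 0). simpl in H. lra. Qed.

Lemma I_disj s t : length s = length t -> s <> t ->
  (/2)^(length s) + leftI s <= leftI t \/ (/2)^(length t) + leftI t <= leftI s.
Proof. intros. unfold leftI. pose proof (bsum_disj s t 0 H H0). simpl in H1. lra. Qed.

Ltac indcases := unfold Defs.ind;
  repeat match goal with |- context [Rlt_dec ?a ?b] => destruct (Rlt_dec a b)
                      | |- context [Rle_dec ?a ?b] => destruct (Rle_dec a b) end.

Lemma pw_0f L R P m : 0 <= L -> L <= R -> 0 <= m -> forall z,
  Rabs (zero_fun z - (Defs.ind L R z + m * Defs.ind P (P+1) z)) = Defs.ind L R z + m * Defs.ind P (P+1) z.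
Proof. intros. unfold zero_fun. indcases; unfold Rabs; destruct Rcase_abs; lra. Qed.

Lemma pw_df L R P m : 0 <= L -> L <= R -> R <= 1 -> (P + 1 <= 0 \/ 1 <= P) -> 0 <= m -> forall z,
  Rabs (Defs.ind 0 1 z - (Defs.ind L R z + m * Defs.ind P (P+1) z)) = (Defs.ind 0 1 z - Defs.ind L R z) + m * Defs.ind P (P+1) z.
Proof. intros. destruct H2; indcases; unfold Rabs; destruct Rcase_abs; lra. Qed.

Lemma pw_ff L R P L' R' P' m : 0 <= L -> L <= R -> R <= 1 -> (P + 1 <= 0 \/ 1 <= P) ->
  0 <= L' -> L' <= R' -> R' <= 1 -> (P' + 1 <= 0 \/ 1 <= P') -> 0 <= m ->
  (R <= L' \/ R' <= L) -> (P + 1 <= P' \/ P' + 1 <= P) -> forall z,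
  Rabs ((Defs.ind L R z + m * Defs.ind P (P+1) z) - (Defs.ind L' R' z + m * Defs.ind P' (P'+1) z)) =
    Defs.ind L R z + Defs.ind L' R' z + m * Defs.ind P (P+1) z + m * Defs.ind P' (P'+1) z.
Proof. intros. destruct H2, H6, H8, H9; indcases; unfold Rabs; destruct Rcase_abs; lra. Qed.

Lemma Z_cases (z : Z) : z <> 0%Z -> IZR z + 1 <= 0 \/ 1 <= IZR z.
Proof.
  intros H. assert ((z <= -1)%Z \/ (1 <= z)%Z) as [H1|H1] by lia; apply IZR_le in H1; lra.
Qed.

Lemma Z_sep (z w : Z) : z <> w -> IZR z + 1 <= IZR w \/ IZR w + 1 <= IZR z.
Proof.
  intros H. assert ((z + 1 <= w)%Z \/ (w + 1 <= z)%Z) as [H1|H1] by lia; apply IZR_le in H1;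
  rewrite plus_IZR in H1; lra.
Qed.

Lemma dist_00 : is_L1dist zero_fun zero_fun 0.
Proof.
  apply L1_of with (fun _ => 0) 0 0.
  - intros; unfold zero_fun. rewrite Rminus_diag, Rabs_R0; auto.
  - intros a b _ _. apply RIval with ((b-a)*0); [apply RInt_cst; intros; reflexivity | ring].
Qed.

Lemma dist_0d : is_L1dist zero_fun d_fun 1.
Proof.
  apply L1_of with (Defs.ind 0 1) 0 1.
  - intros; unfold zero_fun, d_fun. unfold Defs.ind.
    destruct (Rlt_dec 0 z); [destruct (Rle_dec z 1)|]; unfold Rabs; destruct Rcase_abs; lra.
  - intros a b Ha Hb. eapply RIval. apply ind_RInt; lra. ring.
Qed.

Section S.
Variable Psi : list bool -> Z.
Hypothesis Psi_nz : forall s, s <> nil -> Psi s <> 0%Z.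

Lemma dist_0f s : s <> nil ->
  is_L1dist zero_fun (f_sigma Psi s) (INR (length s) + (/2)^(length s)).
Proof.
  intros Hs. pose proof (I_in01 s) as [H1 H2]. pose proof (pow_half_pos (length s)).
  pose proof (Z_cases _ (Psi_nz s Hs)). pose proof (pos_INR (length s)).
  set (P := IZR (Psi s)) in *.
  apply L1_of with (fun z => Defs.ind (leftI s) ((/2)^(length s) + leftI s) z
     + INR (length s) * Defs.ind P (P + 1) z) (- Rabs P - 1) (Rabs P + 1).
  - intros z. unfold f_sigma, d_sigma. apply pw_0f; lra.
  - intros a b Ha Hb. pose proof (Rle_abs P). pose proof (Rle_abs (-P)). rewrite Rabs_Ropp in *.
    eapply RIval. apply RInt_plusR. apply ind_RInt; lra. apply RInt_scalR, ind_RInt; lra. ring.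
Qed.

Lemma dist_df s : s <> nil ->
  is_L1dist d_fun (f_sigma Psi s) (INR (length s) + 1 - (/2)^(length s)).
Proof.
  intros Hs. pose proof (I_in01 s) as [H1 H2]. pose proof (pow_half_pos (length s)).
  pose proof (Z_cases _ (Psi_nz s Hs)). pose proof (pos_INR (length s)).
  set (P := IZR (Psi s)) in *.
  apply L1_of with (fun z => (Defs.ind 0 1 z - Defs.ind (leftI s) ((/2)^(length s) + leftI s) z)
     + INR (length s) * Defs.ind P (P + 1) z) (- Rabs P - 1) (Rabs P + 1).
  - intros z. unfold f_sigma, d_sigma, d_fun. apply pw_df; lra.
  - intros a b Ha Hb. pose proof (Rle_abs P). pose proof (Rle_abs (-P)). rewrite Rabs_Ropp in *.
    eapply RIval. apply RInt_plusR.
    + eapply RIval. apply (is_RInt_minus (V:=R_NormedModule)); apply ind_RInt; lra.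
      unfold minus, plus, opp; simpl. reflexivity.
    + apply RInt_scalR, ind_RInt; lra.
    + unfold minus, plus, opp; simpl. ring.
Qed.

Hypothesis Psi_inj : forall s t, s <> nil -> t <> nil -> Psi s = Psi t -> s = t.

Lemma dist_ff s t : s <> nil -> t <> nil -> s <> t -> length s = length t ->
  is_L1dist (f_sigma Psi s) (f_sigma Psi t) (2 * INR (length s) + 2 * (/2)^(length s)).
Proof.
  intros Hs Ht Hst Hl. pose proof (I_in01 s) as [H1 H2]. pose proof (I_in01 t) as [H1' H2'].
  pose proof (pow_half_pos (length s)).
  pose proof (Z_cases _ (Psi_nz s Hs)). pose proof (Z_cases _ (Psi_nz t Ht)).
  pose proof (pos_INR (length s)).
  assert (Psi s <> Psi t) by (intro E; apply Hst; auto).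
  pose proof (Z_sep _ _ H5). pose proof (I_disj s t Hl Hst).
  rewrite <- Hl in *.
  set (P := IZR (Psi s)) in *. set (P' := IZR (Psi t)) in *.
  apply L1_of with (fun z => Defs.ind (leftI s) ((/2)^(length s) + leftI s) z
     + Defs.ind (leftI t) ((/2)^(length s) + leftI t) z
     + INR (length s) * Defs.ind P (P + 1) z + INR (length s) * Defs.ind P' (P' + 1) z)
     (- Rabs P - Rabs P' - 1) (Rabs P + Rabs P' + 1).
  - intros z. unfold f_sigma, d_sigma. rewrite <- Hl. apply pw_ff; lra.
  - intros a b Ha Hb. pose proof (Rle_abs P). pose proof (Rle_abs (-P)). rewrite Rabs_Ropp in *.
    pose proof (Rle_abs P'). pose proof (Rle_abs (-P')). rewrite Rabs_Ropp in *.
    pose proof (Rabs_pos P). pose proof (Rabs_pos P').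
    eapply RIval. apply RInt_plusR. apply RInt_plusR. apply RInt_plusR.
    apply ind_RInt; lra. apply ind_RInt; lra.
    apply RInt_scalR, ind_RInt; lra. apply RInt_scalR, ind_RInt; lra. ring.
Qed.
End S.

Lemma L1_tri x y D A B : is_L1dist x y D -> is_L1dist zero_fun x A -> is_L1dist zero_fun y B -> B <= A + D.
Proof.
  intros H1 H2 H3. apply Rnot_lt_le. intro H.
  set (eps := (B - A - D) / 3). assert (Heps : eps > 0) by (unfold eps; lra).
  destruct (H1 eps Heps) as [N1 HN1]. destruct (H2 eps Heps) as [N2 HN2]. destruct (H3 eps Heps) as [N3 HN3].
  set (M := Rabs N1 + Rabs N2 + Rabs N3).
  pose proof (Rle_abs N1). pose proof (Rle_abs N2). pose proof (Rle_abs N3).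
  pose proof (Rabs_pos N1). pose proof (Rabs_pos N2). pose proof (Rabs_pos N3).
  destruct (HN1 (-M) M) as [pr1 E1]; try (unfold M; lra).
  destruct (HN2 (-M) M) as [pr2 E2]; try (unfold M; lra).
  destruct (HN3 (-M) M) as [pr3 E3]; try (unfold M; lra).
  pose (pr4 := RiemannInt_P10 1 pr2 pr1). clearbody pr4.
  assert (Hle : RiemannInt pr3 <= RiemannInt pr4).
  { apply RiemannInt_P19. unfold M; lra. intros z _. unfold zero_fun.
    replace (0 - y z) with ((0 - x z) + (x z - y z)) by ring.
    rewrite Rmult_1_l. apply Rabs_triang. }
  assert (E4 : RiemannInt pr4 = RiemannInt pr2 + 1 * RiemannInt pr1) by apply RiemannInt_P13.
  apply Rabs_def2 in E1. apply Rabs_def2 in E2. apply Rabs_def2 in E3.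
  unfold eps in *. lra.
Qed.

Fixpoint all_le (n : nat) : list (list bool) :=
  match n with
  | O => nil :: nil
  | S m => nil :: (map (cons true) (all_le m) ++ map (cons false) (all_le m))
  end.

Lemma all_le_In s : forall n, (length s <= n)%nat -> In s (all_le n).
Proof.
  induction s as [|b s IH]; intros [|n] Hn; simpl in *; try lia; auto.
  right. apply in_or_app. destruct b; [left|right]; apply in_map; apply IH; lia.
Qed.

Lemma nat_unb x : exists K : nat, x < INR K.
Proof.
  destruct (archimed x) as [H _].
  destruct (Z_le_gt_dec (up x) 0) as [Hz|Hz].
  - exists O. apply IZR_le in Hz. simpl. lra.
  - exists (Z.to_nat (up x)). rewrite INR_IZR_INZ, Z2Nat.id by lia. lra.
Qed.

Lemma norm_M Psi (Psi_nz : forall s, s <> nil -> Psi s <> 0%Z) x : inM Psi x -> exists A, is_L1dist zero_fun x A.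
Proof.
  intros [->|[->|[s [Hs ->]]]].
  - exists 0; apply dist_00.
  - exists 1; apply dist_0d.
  - eexists; apply dist_0f; auto.
Qed.

Lemma loc_fin Psi (Psi_nz : forall s, s <> nil -> Psi s <> 0%Z) : M_locally_finite Psi.
Proof.
  intros x r Hx. destruct (norm_M Psi Psi_nz x Hx) as [A HA].
  destruct (nat_unb (A + r)) as [K HK].
  exists (zero_fun :: d_fun :: map (f_sigma Psi) (all_le K)).
  intros y D Hy HD Hr.
  destruct Hy as [->|[->|[s [Hs ->]]]]; [left; auto | right; left; auto | right; right].
  apply in_map. apply all_le_In.
  pose proof (L1_tri _ _ _ _ _ HD HA (dist_0f Psi Psi_nz s Hs)).
  pose proof (pow_half_pos (length s)).
  destruct (le_lt_dec (length s) K) as [Hl|Hl]; auto.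
  apply lt_INR in Hl. lra.
Qed.

Lemma ser_val (u : nat -> R) (l l' : R) : is_series u l -> l = l' -> is_series u l'.
Proof. intros H <-; exact H. Qed.

Lemma ser_term (u : nat -> R) l : (forall n, 0 <= u n) -> is_series u l -> forall k, u k <= l.
Proof.
  intros Hp Hs k. apply is_series_Reals in Hs.
  assert (G : Un_growing (sum_f_R0 u)) by (intro n; simpl; pose proof (Hp (S n)); lra).
  pose proof (growing_ineq _ _ G Hs k).
  destruct k; simpl in *; auto. pose proof (cond_pos_sum u k Hp). lra.
Qed.

Lemma ser_zero (u : nat -> R) : (forall n, 0 <= u n) -> is_series u 0 -> forall k, u k = 0.
Proof. intros Hp Hs k. pose proof (ser_term u 0 Hp Hs k). pose proof (Hp k). lra. Qed.

Lemma ser_0 : is_series (fun _ : nat => 0) 0.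
Proof.
  apply is_series_Reals. intros eps He. exists O. intros n _. rewrite sum_cte.
  unfold R_dist. rewrite Rmult_0_l, Rminus_diag, Rabs_R0. lra.
Qed.

Lemma ser_nz (u : nat -> R) l : is_series u l -> l <> 0 -> exists k, u k <> 0.
Proof.
  intros Hs Hl. apply Classical_Prop.NNPP. intro Hn. apply Hl.
  assert (E : forall k, u k = 0).
  { intro k. apply Classical_Prop.NNPP. intro H. apply Hn. exists k; auto. }
  rewrite <- (is_series_unique _ _ Hs). apply is_series_unique.
  apply is_series_ext with (fun _ => 0). intro; rewrite E; auto. apply ser_0.
Qed.

Lemma ser_plus (u v : nat -> R) U V : is_series u U -> is_series v V ->
  is_series (fun k => u k + v k) (U + V).
Proof. intros. apply (is_series_plus (K:=R_AbsRing) (V:=R_NormedModule)); auto. Qed.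

Lemma ser_scal (u : nat -> R) c U : is_series u U -> is_series (fun k => c * u k) (c * U).
Proof. intros. apply (is_series_scal (K:=R_AbsRing) (V:=R_NormedModule)); auto. Qed.

Lemma ser_lin (u v w : nat -> R) U V W : is_series u U -> is_series v V -> is_series w W ->
  is_series (fun k => (u k + v k - w k) / 2) ((U + V - W) / 2).
Proof.
  intros Hu Hv Hw.
  pose proof (ser_plus _ _ _ _ (ser_plus _ _ _ _ Hu Hv) (ser_scal _ (-1) _ Hw)) as H.
  pose proof (ser_scal _ (/2) _ H) as H'.
  eapply ser_val. eapply is_series_ext. 2: exact H'. intro n; simpl; unfold Rdiv; ring.
  unfold Rdiv; ring.
Qed.

Definition lsum (L : list (list bool)) (F : list bool -> R) : R :=
  fold_right (fun s acc => F s + acc) 0 L.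

Lemma lsum_series L (G : list bool -> nat -> R) (V : list bool -> R) :
  (forall s, In s L -> is_series (G s) (V s)) ->
  is_series (fun k => lsum L (fun s => G s k)) (lsum L V).
Proof.
  induction L as [|s L IH]; intros H; simpl.
  - apply ser_0.
  - apply ser_plus. apply H; simpl; auto. apply IH. intros; apply H; simpl; auto.
Qed.

Lemma lsum_const L c : lsum L (fun _ => c) = INR (length L) * c.
Proof.
  induction L as [|s L IH]. simpl; ring. change (length (s :: L)) with (S (length L)). rewrite S_INR. unfold lsum in *. simpl. rewrite IH. ring.
Qed.

Lemma lsum_zero L F : (forall s, In s L -> F s = 0) -> lsum L F = 0.
Proof.
  induction L as [|s L IH]; intros H. reflexivity. unfold lsum in *; simpl. rewrite H by (simpl; auto). rewrite IH by (intros; apply H; simpl; auto). ring.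
Qed.

Lemma lsum_disj L F c : NoDup L -> 0 <= c -> (forall s, In s L -> 0 <= F s <= c) ->
  (forall s t, In s L -> In t L -> s <> t -> F s = 0 \/ F t = 0) -> lsum L F <= c.
Proof.
  induction L as [|s L IH]; intros Hnd Hc Hb Hd; simpl. auto.
  apply NoDup_cons_iff in Hnd as [Hni Hnd].
  destruct (Req_dec (F s) 0) as [E|E].
  - rewrite E. rewrite Rplus_0_l. apply IH; auto.
    intros; apply Hb; simpl; auto. intros; apply Hd; simpl; auto.
  - rewrite lsum_zero. pose proof (Hb s (or_introl eq_refl)). lra.
    intros t Ht. destruct (Hd s t) as [H|H]; simpl; auto; try congruence.
Qed.

Fixpoint all_eq (n : nat) : list (list bool) :=
  match n with
  | O => nil :: nil
  | S m => map (cons true) (all_eq m) ++ map (cons false) (all_eq m)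
  end.

Lemma all_eq_len n s : In s (all_eq n) -> length s = n.
Proof.
  revert s; induction n as [|n IH]; intros s H; simpl in *.
  - destruct H as [<-|[]]; auto.
  - apply in_app_or in H. destruct H as [H|H]; apply in_map_iff in H as [t [<- Ht]]; simpl; f_equal; auto.
Qed.

Lemma NoDup_map_cons b (L : list (list bool)) : NoDup L -> NoDup (map (cons b) L).
Proof.
  induction L as [|s L IH]; intros H; simpl. constructor.
  apply NoDup_cons_iff in H as [H1 H2]. constructor; auto.
  intro Hin. apply in_map_iff in Hin as [t [E Ht]]. injection E as ->. auto.
Qed.

Lemma all_eq_nodup n : NoDup (all_eq n).
Proof.
  induction n as [|n IH]; simpl. constructor. simpl; auto. constructor.
  apply NoDup_app; try apply NoDup_map_cons; auto.
  intros s H1 H2. apply in_map_iff in H1 as [t [<- _]]. apply in_map_iff in H2 as [u [E _]]. discriminate.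
Qed.

Lemma all_eq_length n : length (all_eq n) = (2 ^ n)%nat.
Proof.
  induction n as [|n IH]; simpl; auto. rewrite length_app, !length_map, IH. lia.
Qed.

Lemma count_one n : INR (length (all_eq n)) * (/2)^n = 1.
Proof.
  rewrite all_eq_length, pow_INR. rewrite <- Rpow_mult_distr.
  replace (INR 2 * /2) with 1 by (simpl; field). apply pow1.
Qed.

Lemma one_d a b x y : Rabs (x - y) = Rabs (a - x) + Rabs (a - y) ->
  (Rabs (a - x) + Rabs (a - b) - Rabs (b - x)) <= 0 \/ (Rabs (a - y) + Rabs (a - b) - Rabs (b - y)) <= 0.
Proof.
  intros H. destruct (Rle_dec (Rabs (a - x) + Rabs (a - b) - Rabs (b - x)) 0); [left; auto|right].
  revert H n. unfold Rabs; repeat destruct Rcase_abs; lra.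
Qed.

Lemma one_tri a b x : 0 <= (Rabs (a - x) + Rabs (a - b) - Rabs (b - x)) / 2 <= Rabs (a - b).
Proof. unfold Rabs; repeat destruct Rcase_abs; lra. Qed.

Lemma no_embed Psi (Psi_nz : forall s, s <> nil -> Psi s <> 0%Z)
  (Psi_inj : forall s t, s <> nil -> t <> nil -> Psi s = Psi t -> s = t) :
  ~ (exists phi : (R -> R) -> (nat -> R), M_l1_isometric_embedding Psi phi).
Proof.
  intros [phi [_ Hiso]].
  assert (M0 : inM Psi zero_fun) by (left; auto).
  assert (Md : inM Psi d_fun) by (right; left; auto).
  assert (Mf : forall s, s <> nil -> inM Psi (f_sigma Psi s)) by (intros; right; right; eauto).
  set (a := phi zero_fun). set (b := phi d_fun).
  set (X := fun s => phi (f_sigma Psi s)).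
  assert (Hab : is_series (fun k => Rabs (a k - b k)) 1)
    by (apply is_series_Reals; apply (Hiso _ _ _ M0 Md dist_0d)).
  assert (Hax : forall s, s <> nil -> is_series (fun k => Rabs (a k - X s k)) (INR (length s) + (/2)^(length s)))
    by (intros; apply is_series_Reals; apply (Hiso _ _ _ M0 (Mf s H) (dist_0f Psi Psi_nz s H))).
  assert (Hbx : forall s, s <> nil -> is_series (fun k => Rabs (b k - X s k)) (INR (length s) + 1 - (/2)^(length s)))
    by (intros; apply is_series_Reals; apply (Hiso _ _ _ Md (Mf s H) (dist_df Psi Psi_nz s H))).
  assert (Hxx : forall s t, s <> nil -> t <> nil -> s <> t -> length s = length t ->
     is_series (fun k => Rabs (X s k - X t k)) (2 * INR (length s) + 2 * (/2)^(length s))).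
  { intros s t Hs Ht Hst Hl. apply is_series_Reals.
    apply (Hiso _ _ _ (Mf s Hs) (Mf t Ht) (dist_ff Psi Psi_nz Psi_inj s t Hs Ht Hst Hl)). }
  set (sh := fun s k => (Rabs (a k - X s k) + Rabs (a k - b k) - Rabs (b k - X s k)) / 2).
  assert (Hsh : forall s, s <> nil -> is_series (sh s) ((/2)^(length s))).
  { intros s Hs. eapply ser_val. apply ser_lin; [apply Hax|apply Hab|apply Hbx]; auto. field. }
  assert (Hshb : forall s k, 0 <= sh s k <= Rabs (a k - b k)) by (intros; apply one_tri).
  assert (Hdisj : forall s t, s <> nil -> t <> nil -> s <> t -> length s = length t ->
     forall k, sh s k = 0 \/ sh t k = 0).
  { intros s t Hs Ht Hst Hl k.
    assert (W : is_series (fun k => Rabs (a k - X s k) + Rabs (a k - X t k) - Rabs (X s k - X t k)) 0).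
    { pose proof (ser_plus _ _ _ _ (ser_plus _ _ _ _ (Hax s Hs) (Hax t Ht)) (ser_scal _ (-1) _ (Hxx s t Hs Ht Hst Hl))) as H.
      eapply ser_val. eapply is_series_ext. 2: exact H. intro; simpl; ring. rewrite Hl; ring. }
    assert (Wp : forall k, 0 <= Rabs (a k - X s k) + Rabs (a k - X t k) - Rabs (X s k - X t k)).
    { intro j. replace (X s j - X t j) with ((X s j - a j) + (a j - X t j)) by ring.
      pose proof (Rabs_triang (X s j - a j) (a j - X t j)).
      rewrite <- (Rabs_Ropp (X s j - a j)) in H. replace (- (X s j - a j)) with (a j - X s j) in H by ring. lra. }
    pose proof (ser_zero _ Wp W k) as E.
    assert (E' : Rabs (X s k - X t k) = Rabs (a k - X s k) + Rabs (a k - X t k)) by lra.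
    pose proof (one_d (a k) (b k) _ _ E'). pose proof (Hshb s k). pose proof (Hshb t k).
    unfold sh in *. destruct H; [left|right]; lra. }
  destruct (ser_nz _ _ Hab ltac:(lra)) as [k0 Hk0].
  assert (Hg : 0 < Rabs (a k0 - b k0)) by (pose proof (Rabs_pos (a k0 - b k0)); lra).
  destruct (pow_lt_1_zero (/2) ltac:(rewrite Rabs_pos_eq; lra) _ Hg) as [N HN].
  set (n := S N). set (L := all_eq n).
  assert (HL : forall s, In s L -> s <> nil /\ length s = n).
  { intros s Hs. pose proof (all_eq_len n s Hs). split; auto. intro; subst s; simpl in *; unfold n in *; lia. }
  set (T := fun k => lsum L (fun s => sh s k)).
  assert (HT : is_series T 1).
  { eapply ser_val. apply (lsum_series L sh (fun s => (/2)^(length s))).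
    intros s Hs. apply Hsh, HL, Hs.
    replace (lsum L (fun s => (/2)^(length s))) with (lsum L (fun _ => (/2)^n)).
    rewrite lsum_const. apply count_one.
    unfold lsum. clear -HL. induction L as [|s L' IH]; simpl; auto.
    rewrite (proj2 (HL s (or_introl eq_refl))). f_equal. apply IH. intros; apply HL; simpl; auto. }
  assert (HTle : forall k, T k <= Rabs (a k - b k)).
  { intros k. apply lsum_disj. apply all_eq_nodup. apply Rabs_pos.
    intros; apply Hshb. intros s t Hs Ht Hst. apply Hdisj; auto; try apply HL; auto.
    rewrite (proj2 (HL s Hs)), (proj2 (HL t Ht)); auto. }
  assert (Hdiff : is_series (fun k => Rabs (a k - b k) + (-1) * T k) 0).
  { eapply ser_val. apply ser_plus. exact Hab. apply ser_scal, HT. ring. }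
  assert (Dp : forall k, 0 <= Rabs (a k - b k) + (-1) * T k) by (intro j; pose proof (HTle j); lra).
  pose proof (ser_zero _ Dp Hdiff k0) as E0.
  assert (HTk0 : T k0 <= (/2)^n).
  { apply lsum_disj. apply all_eq_nodup. pose proof (pow_half_pos n); lra.
    intros s Hs. split. apply Hshb. destruct (HL s Hs) as [Hs1 Hs2]. rewrite <- Hs2.
    apply (ser_term (sh s)); auto. intros; apply Hshb.
    intros s t Hs Ht Hst. apply Hdisj; auto; try apply HL; auto.
    rewrite (proj2 (HL s Hs)), (proj2 (HL t Ht)); auto. }
  specialize (HN n ltac:(unfold n; lia)). rewrite Rabs_pos_eq in HN by (pose proof (pow_half_pos n); lra).
  lra.
Qed.

Theorem mainTheorem7 (Psi : list bool -> Z)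
  (Psi_nz : forall s, s <> nil -> Psi s <> 0%Z)
  (Psi_inj : forall s t, s <> nil -> t <> nil -> Psi s = Psi t -> s = t) :
  M_locally_finite Psi /\
  ~ (exists phi : (R -> R) -> (nat -> R), M_l1_isometric_embedding Psi phi).
Proof.
  split. apply loc_fin; auto. apply no_embed; auto.
Qed.
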